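(* Let $R$ be a discrete $\Gamma$-ring and $w\in R[2]$ a formal sum law in $R$. For every $k\ge1$ and every pointed map $f:[2^k]\to[2^{k-1}]$ such that $f(1_{2^k})=1_{2^{k-1}}$ in $H\mathbb{N}[2^{k-1}]$ (i.e. $f$ maps exactly $2^{k-1}$ elements of $\{1,\dots,2^k\}$ bijectively onto $\{1,\dots,2^{k-1}\}$ and the rest to $0$), one has $f(w^k)=w^{k-1}$ in $R[2^{k-1}]$.
   Context: Let $[n]=\{0,1,\dots,n\}$, pointed at $0$. A $\Gamma$-space is a functor $F$ from finite pointed sets $[n]$ and pointed maps to pointed simplicial sets with $F[0]$ a point; for a pointed map $f$ we write $f$ also for $F(f)$. $\Sigma_n$ acts on $F[n]$ via permutations of $\{1,\dots,n\}$. We identify $[n]\wedge[m]$ with $[nm]$ via $i\wedge j\mapsto (j-1)n+i$. A $\Gamma$-ring is a $\Gamma$-space $R$ with unit $1\in R[1]$ and an associative unital multiplication given by natural maps $R(K)\wedge R(L)\to R(K\wedge L)$, $p\wedge q\mapsto pq$; it is discrete if all $R(K)$ are sets. For $w\in R[2]$, $w^k\in R[2^k]$ is the $k$-fold product. $p^n_i:[n]\to[n-1]$ is given by $p^n_i(j)=j$ for $j<i$, $p^n_i(i)=0$, $p^n_i(j)=j-1$ for $j>i$. $H\mathbb{N}[k]=\mathbb{N}^k$ (reduced free commutative monoid on $[k]$, pointed maps act by summing coefficients along fibres), and $1_n=(1,\dots,1)\in H\mathbb{N}[n]$. A formal sum law in $R$ is $w\in R[2]$ with $p^2_1(w)=p^2_2(w)=1$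 and with $w^k$ fixed by $\Sigma_{2^k}$ for all $k\ge1$. *)

(* Defs.v *)
(* Discrete Gamma-rings over the skeleton [n] = {0,...,n},
   encoded as 'I_n.+1 with basepoint ord0. *)
From HB Require Import structures.
From mathcomp Require Import all_boot.
Set Implicit Arguments. Unset Strict Implicit. Unset Printing Implicit Defensive.

Record ptmap (n m : nat) := PMap {
  pfun :> 'I_n.+1 -> 'I_m.+1;
  pfun0 : pfun ord0 == ord0 }.

Lemma pid_subproof n : (@id 'I_n.+1) ord0 == ord0. Proof. exact: eqxx. Qed.
Definition pid n : ptmap n n := PMap (@pid_subproof n).

Lemma pcomp_subproof n m l (g : ptmap m l) (f : ptmap n m) : (g \o f) ord0 == ord0.
Proof. by rewrite /= (eqP (pfun0 f)) (pfun0 g). Qed.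
Definition pcomp n m l (g : ptmap m l) (f : ptmap n m) : ptmap n l :=
  PMap (pcomp_subproof g f).

(* smash product of pointed maps, using [n] ^ [m] = [nm], i ^ j |-> (j-1)n + i *)
Definition smash_fun n m n' m' (f : ptmap n n') (g : ptmap m m')
  (k : 'I_(n * m).+1) : 'I_(n' * m').+1 :=
  if nat_of_ord k == 0 then ord0 else
  let fi : 'I_n'.+1 := f (inord ((k.-1 %% n).+1)) in
  let gj : 'I_m'.+1 := g (inord ((k.-1 %/ n).+1)) in
  if (nat_of_ord fi == 0) || (nat_of_ord gj == 0) then ord0
  else inord ((nat_of_ord gj).-1 * n' + fi).

Lemma smash_subproof n m n' m' (f : ptmap n n') (g : ptmap m m') :
  smash_fun f g ord0 == ord0.
Proof. by rewrite /smash_fun eqxx. Qed.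
Definition smash n m n' m' (f : ptmap n n') (g : ptmap m m') : ptmap (n * m) (n' * m') :=
  PMap (smash_subproof f g).

Definition pface_fun n (i : nat) (j : 'I_n.+2) : 'I_n.+1 :=
  if nat_of_ord j < i then inord j
  else if nat_of_ord j == i then ord0 else inord (nat_of_ord j).-1.

Lemma pface_subproof n (i : nat) : i != 0 -> @pface_fun n i ord0 == ord0.
Proof.
rewrite /pface_fun /= lt0n => ->.
by apply/eqP; apply: val_inj; rewrite /= inordK.
Qed.
Definition pface n i (hi : i != 0) : ptmap n.+1 n := PMap (pface_subproof n hi).

Definition p2_1 : ptmap 2 1 := @pface 1 1 isT.
Definition p2_2 : ptmap 2 1 := @pface 1 2 isT.

Record GammaRing := {
  gcar : nat -> Type;
  gbase : forall n, gcar n;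
  gact : forall n m, ptmap n m -> gcar n -> gcar m;
  gone : gcar 1;
  gmul : forall n m, gcar n -> gcar m -> gcar (n * m);
  gact_id : forall n (x : gcar n), gact (pid n) x = x;
  gact_comp : forall n m l (g : ptmap m l) (f : ptmap n m) (x : gcar n),
      gact (pcomp g f) x = gact g (gact f x);
  gact_base : forall n m (f : ptmap n m), gact f (gbase n) = gbase m;
  gcar0 : forall x y : gcar 0, x = y;
  (* multiplication is defined on the smash product *)
  gmul_basel : forall n m (q : gcar m), gmul (gbase n) q = gbase (n * m);
  gmul_baser : forall n m (p : gcar n), gmul p (gbase m) = gbase (n * m);
  gmul_nat : forall n m n' m' (f : ptmap n n') (g : ptmap m m') p q,
      gact (smash f g) (gmul p q) = gmul (gact f p) (gact g q);
  gmul1 : forall n (p : gcar n),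
      eq_rect _ gcar (gmul gone p) _ (mul1n n) = p;
  gmulr1 : forall n (p : gcar n),
      eq_rect _ gcar (gmul p gone) _ (muln1 n) = p;
  gmulA : forall n m l (p : gcar n) (q : gcar m) (r : gcar l),
      eq_rect _ gcar (gmul p (gmul q r)) _ (mulnA n m l) = gmul (gmul p q) r
}.

Fixpoint wpow (R : GammaRing) (w : gcar R 2) (k : nat) : gcar R (2 ^ k) :=
  match k with
  | 0 => gone R
  | k'.+1 => eq_rect _ (gcar R) (gmul (wpow w k') w) _ (esym (expnSr 2 k'))
  end.

(* H N : action of pointed maps on N^[n] (coordinate 0 ignored) *)
Definition hN_act n m (f : ptmap n m) (x : 'I_n.+1 -> nat) (j : 'I_m.+1) : nat :=
  \sum_(i | f i == j) x i.
Definition hN_ones n (i : 'I_n.+1) : nat := (i != ord0).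

Definition formal_sum_law (R : GammaRing) (w : gcar R 2) : Prop :=
  gact p2_1 w = gone R /\ gact p2_2 w = gone R /\
  forall k, 0 < k -> forall s : ptmap (2 ^ k) (2 ^ k), injective s ->
    gact s (wpow w k) = wpow w k.

(* Main.v *)
Require Import Defs.
From mathcomp Require Import all_boot zify.
From Stdlib Require Import FunctionalExtensionality.
Set Implicit Arguments. Unset Strict Implicit.

Lemma pm_ext n m (f g : ptmap n m) : f =1 g -> f = g.
Proof.
case: f => f0 h0; case: g => g0 h1 /= H.
have E := functional_extensionality _ _ H. subst g0.
by rewrite (bool_irrelevance h0 h1).
Qed.

Lemma castpm_subproof a b (e : a = b) : cast_ord (congr1 S e) ord0 == ord0.
Proof. by apply/eqP; apply: val_inj. Qed.
Definition castpm a b (e : a = b) : ptmap a b := PMap (castpm_subproof e).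

Lemma gact_cast (R : GammaRing) a b (e : a = b) (x : gcar R a) :
  gact (castpm e) x = eq_rect a (gcar R) x b e.
Proof.
case: b / e => /=. rewrite -[RHS](gact_id x). congr gact.
by apply: pm_ext => i; apply: val_inj.
Qed.

Lemma smash_val N (hN : 0 < N) (u : 'I_(N*2).+1) :
  nat_of_ord (smash_fun (pid N) p2_1 u) = if N < u then u - N else 0.
Proof.
rewrite /smash_fun.
case u0: (nat_of_ord u == 0).
  by rewrite (eqP u0).
have hu := ltn_ord u.
have Hd := divn_eq u.-1 N. have Hr := ltn_pmod u.-1 hN.
set q := u.-1 %/ N in Hd *. set r := u.-1 %% N in Hd Hr *.
have hq : q < 2 by move: u0 => /eqP u0; nia.
rewrite /= /p2_1 /= /pface_fun /=.
have hr1 : r.+1 < N.+1 by [].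
rewrite (inordK hr1) (@inordK 2 q.+1) //.
case: q hq Hd => [|[|q]] // _ Hd /=.
  by move: u0 => /eqP u0; case: ifP => //; lia.
rewrite (@inordK 1 1) //= mul0n add0n inordK; last by lia.
by move: u0 => /eqP u0; case: ifP; lia.
Qed.

Section Comb.
Variables (N : nat) (f : ptmap (N*2) N).
Hypothesis hf : forall j : 'I_N.+1, j != ord0 -> hN_act f (@hN_ones _) j = 1.

Lemma f0 : f ord0 = ord0. Proof. exact/eqP/(pfun0 f). Qed.

Lemma f_uniq x y : f x = f y -> f x != ord0 -> x = y.
Proof.
move=> exy nz; apply/eqP/negPn/negP => nxy.
have := hf nz; rewrite /hN_act (bigD1 x) //= (bigD1 y) /=; last first.
  by rewrite -exy eqxx /= eq_sym.
have xn : x != ord0 by apply: contraNneq nz => ->; rewrite f0.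
have yn : y != ord0 by apply: contraNneq nz; rewrite exy => ->; rewrite f0.
by rewrite /hN_ones xn yn.
Qed.

Definition Zp := [pred x : 'I_(N*2).+1 | (x != ord0) && (f x == ord0)].

Lemma card_Zp : #|Zp| = N.
Proof.
have H1 : \sum_(j : 'I_N.+1 | j != ord0) 1 = N.
  by rewrite sum1_card cardC1 card_ord.
have H2 : \sum_(j : 'I_N.+1 | j != ord0) hN_act f (@hN_ones _) j = N.
  by rewrite -[RHS]H1; apply: eq_bigr => j /hf.
have H2' : \sum_(i : 'I_(N*2).+1 | f i != ord0) hN_ones i = N.
  rewrite (partition_big f (fun j : 'I_N.+1 => j != ord0)) //= -[RHS]H2.
  apply: eq_bigr => j jn; apply: eq_bigl => i.
  by case: (f i =P j) => [->|]; rewrite ?jn ?andbF.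
have H3 : \sum_(i : 'I_(N*2).+1) hN_ones i = N * 2.
  rewrite (bigD1 ord0) //= add0n.
  transitivity (\sum_(i in predC1 (ord0: 'I_(N*2).+1)) 1); last first.
    by rewrite sum1_card cardC1 card_ord.
  by apply: eq_big => // i; rewrite /hN_ones => /= ->.
rewrite (bigID (fun i => f i == ord0)) /= H2' in H3.
have H4 : \sum_(i : 'I_(N*2).+1 | f i == ord0) hN_ones i = N.
  by apply/eqP; rewrite -(eqn_add2r N) H3 muln2 -addnn.
rewrite -sum1_card -[RHS]H4.
rewrite (eq_bigl (fun i => (f i == ord0) && (i != ord0))); last first.
  by move=> i; rewrite /Zp /= andbC.
rewrite big_mkcondr /=; apply: eq_bigr => i _.
by rewrite /hN_ones; case: (i != ord0).
Qed.

Definition zs := enum Zp.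

Lemma index_lt x : Zp x -> index x zs < N.
Proof. by move=> zx; rewrite -[X in _ < X]card_Zp cardE index_mem mem_enum. Qed.

Definition sigma_fun (x : 'I_(N*2).+1) : 'I_(N*2).+1 :=
  if f x != ord0 then inord (N + f x)
  else if x == ord0 then ord0 else inord (index x zs).+1.

Lemma sigma_val x : nat_of_ord (sigma_fun x) =
  if f x != ord0 then N + f x else if x == ord0 then 0 else (index x zs).+1.
Proof.
rewrite /sigma_fun; case: ifP => fx.
  by rewrite inordK //; have := ltn_ord (f x); lia.
case: ifP => x0 //; rewrite inordK //.
have : Zp x by rewrite /Zp /= x0 /=; move/negbFE: fx.
by move/index_lt; lia.
Qed.

Lemma sigma_subproof : sigma_fun ord0 == ord0.
Proof. by rewrite /sigma_fun f0 eqxx. Qed.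
Definition sigma : ptmap (N*2) (N*2) := PMap sigma_subproof.

Lemma sigma_inj : injective sigma.
Proof.
move=> x y /(congr1 (@nat_of_ord _)); rewrite /= !sigma_val.
have Hx : (f x != ord0) = (nat_of_ord (f x) != 0) by [].
have Hy : (f y != ord0) = (nat_of_ord (f y) != 0) by [].
case fx: (f x != ord0); case fy: (f y != ord0).
- move=> e; apply: f_uniq => //; apply: val_inj => /=; lia.
- have fx' : 0 < f x by rewrite lt0n -Hx fx.
  case: ifP => y0 e; exfalso; first lia.
  have : Zp y by rewrite /Zp /= y0 /=; move/negbFE: fy.
  move/index_lt; lia.
- have fy' : 0 < f y by rewrite lt0n -Hy fy.
  case: ifP => x0 e; exfalso; first lia.
  have : Zp x by rewrite /Zp /= x0 /=; move/negbFE: fx.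
  move/index_lt; lia.
- case: ifP => x0; case: ifP => y0 //.
  + by move/eqP: x0 => ->; move/eqP: y0 => ->.
  + move=> [] e.
    have zx : Zp x by rewrite /Zp /= x0 /=; move/negbFE: fx.
    have zy : Zp y by rewrite /Zp /= y0 /=; move/negbFE: fy.
    rewrite -(nth_index ord0 (s := zs) (x := x)) ?mem_enum //.
    by rewrite e nth_index ?mem_enum.
Qed.

Lemma sigma_h x : nat_of_ord (f x) =
  if N < sigma x then sigma x - N else 0.
Proof.
rewrite /= sigma_val; case fx: (f x != ord0).
  have : 0 < f x by rewrite lt0n; exact: fx.
  by case: ifP; lia.
move/negbFE/eqP: (fx) => ->.
case x0: (x == ord0) => //=.
have : Zp x by rewrite /Zp /= x0 /=; move/negbFE: fx.
move/index_lt => h; case: ifP => //; lia.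
Qed.

End Comb.

Lemma key (R : GammaRing) (w : gcar R 2) (h1 : gact p2_1 w = gone R) N (hN : 0 < N)
  M (e : N*2 = M) (x : gcar R N) (f : ptmap M N)
  (hf : forall j : 'I_N.+1, j != ord0 -> hN_act f (@hN_ones _) j = 1)
  (hs : forall s : ptmap M M, injective s ->
     gact s (eq_rect _ (gcar R) (gmul x w) _ e) = eq_rect _ (gcar R) (gmul x w) _ e) :
  gact f (eq_rect _ (gcar R) (gmul x w) _ e) = x.
Proof.
case: M / e f hf hs => f hf hs /=.
have Ef : f = Defs.pcomp (castpm (muln1 N)) (Defs.pcomp (smash (pid N) p2_1) (sigma f)).
  apply: pm_ext => v; apply: val_inj => /=.
  by rewrite smash_val // -(sigma_h hf).
rewrite Ef !gact_comp hs; last exact: sigma_inj hf.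
by rewrite gmul_nat gact_id h1 gact_cast gmulr1.
Qed.

Theorem lemma2p2p1 (R : GammaRing) (w : gcar R 2) (hw : formal_sum_law w)
  (k : nat) (hk : 0 < k) (f : ptmap (2 ^ k) (2 ^ k.-1))
  (hf : forall j : 'I_(2 ^ k.-1).+1, j != ord0 -> hN_act f (@hN_ones _) j = 1) :
  gact f (wpow w k) = wpow w k.-1.
Proof.
case: k hk f hf => // k _ f hf /=.
case: hw => h1 [_ hs].
exact: (key h1 (expn_gt0 2 k) (e := esym (expnSr 2 k)) hf (hs k.+1 isT)).
Qed.
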